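(* Let $I$ be a set of players, for each $i\in I$ let $G_i$ be a compact convex subset of a Hausdorff locally convex topological vector space, and let $G=(G_i,P_i,Q_i)_{i\in I}$ be a general qualitative game satisfying property $T$, where $P_i,Q_i:\prod_{j\in I}G_j\to 2^{G_i}$ satisfy for each $i\in I$: (i) $y_i\in Q_i(y_i,x_{-i})$ for each $y_i\in G_i$ and each $x_{-i}\in G_{-i}$; (ii) $Q_i$ has convex closed values; (iii) $x_i\notin \mathrm{cl}\,P_i(x)$ for each $x\in\prod_{j\in I}G_j$; (iv) $P_i$ is lower semicontinuous with open and convex values in $G_i$. Then: (a) if $G\to^* H$ and there exist $i\in I$ and $x_i,y_i\in G_i$ with $y_i\succ_H x_i$, then there exists $x_i^*\in H_i$ such that $x_i^*\succ_H x_i$ and $z_i\not\succ_H x_i^*$ for all $z_i\in G_i$; (b) if $M$ is a nonempty maximal $(\to^* )$-reduction of $G$, then $M$ is the unique maximal $(\to^* )$-reduction of $G$.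
   Context: $I$ is a nonempty set; $X=\prod_{j\in I}G_j$, $G_{-i}=\prod_{j\ne i}G_j$, $x=(x_i,x_{-i})$. A general qualitative game is $G=(G_i,P_i,Q_i)_{i\in I}$ with correspondences $P_i,Q_i:X\to 2^{G_i}$. It satisfies property $T$ if for each $i$ and each $x\in X$: $P_i(x)\subseteq Q_i(x)$, and $y_i\in P_i(x)$ implies $Q_i(y_i,x_{-i})\subseteq P_i(x)$. A pairing of $G$ is a family $H=(H_i)_{i\in I}$ with $H_i\subseteq G_i$ (the $P_i$ restricted to $\prod_jH_j$); $H_{-i}=\prod_{j\ne i}H_j$; $H$ is nonempty if every $H_i\neq\emptyset$. For $x_i,y_i\in G_i$: $y_i\succ_H x_i$ iff $H_{-i}\neq\emptyset$ and $y_i\in P_i(x_i,x_{-i})$ for all $x_{-i}\in H_{-i}$. For pairings $R,S$ with $S_i\subseteq R_i$ for all $i$: $R\to S$ means for every $i$ and $x_i\in R_i\setminus S_i$, $\bigcap_{x_{-i}\in R_{-i}}P_i(x_i,x_{-i})\ne\emptyset$; it is fast if moreover for every $i$ and $x_i\in R_i$, $\bigcap_{x_{-i}\in R_{-i}}P_i(x_i,x_{-i})\neq\emptyset$ implies $x_i\notin S_i$. $G\to^*H$ means there is a finite or countably infinite sequence of pairings $R^0=G,R^1,\dots$ with $R^t\to R^{t+1}$ fast for each $t$ and $H_i=\bigcap_tR^t_i$ for each $i$. $H$ is a maximal $(\to^* )$-reduction of $G$ if $G\to^*H$ and, for pairings $H'$ with $H'_i\subseteq H_i$, $H\to H'$ holds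 only for $H'=H$. *)

(* Defs.v *)
From HB Require Import structures.
From mathcomp Require Import all_boot all_order all_algebra.
From mathcomp Require Import all_classical all_reals all_analysis.
Unset Printing Implicit Defensive.
Import Order.TTheory GRing.Theory Num.Theory.
Local Open Scope classical_set_scope.

Section QualitativeGame.
Context {R : realType} {I : Type} (E : I -> tvsType R).

Definition profile := prod_topology (fun j => E j : topologicalType).

(** (y_i, x_{-i}) : replace the i-th coordinate of x by y_i *)
Definition upd (x : profile) (i : I) (yi : E i) : profile :=
  fun j => match pselect (i = j) with
           | left e => eq_rect i (fun k => E k : Type) yi j e
           | right _ => x j
           end.

Definition in_prod (S : forall i, set (E i)) (x : profile) : Prop :=
  forall j, S j (x j).

Definition in_prod_minus (S : forall i, set (E i)) (i : I) (x : profile) : Prop :=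
  forall j, j <> i -> S j (x j).

Definition ropen {T : topologicalType} (A B : set T) : Prop :=
  exists U, open U /\ B = U `&` A.
Definition rclosed {T : topologicalType} (A B : set T) : Prop :=
  exists C, closed C /\ B = C `&` A.

Variables (G : forall i, set (E i)) (P Q : forall i, profile -> set (E i)).

Definition property_T : Prop :=
  forall (i : I) (x : profile), in_prod G x ->
    P i x `<=` Q i x /\
    (forall yi, P i x yi -> Q i (upd x i yi) `<=` P i x).

Definition pairing (H : forall i, set (E i)) : Prop := forall i, H i `<=` G i.

Definition pairing_nonempty (H : forall i, set (E i)) : Prop :=
  forall i, H i !=set0.

Definition succH (H : forall i, set (E i)) (i : I) (xi yi : E i) : Prop :=
  (exists x : profile, in_prod_minus H i x) /\
  (forall x : profile, in_prod_minus H i x -> P i (upd x i xi) yi).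

(** bigcap_{x_{-i} in R_{-i}} P_i(x_i, x_{-i}) is nonempty (intersection taken
    inside G_i, so that the empty intersection is G_i) *)
Definition dominated (Rp : forall i, set (E i)) (i : I) (xi : E i) : Prop :=
  exists yi, G i yi /\
    forall x : profile, in_prod_minus Rp i x -> P i (upd x i xi) yi.

Definition arrow (Rp S : forall i, set (E i)) : Prop :=
  (forall i, S i `<=` Rp i) /\
  (forall i xi, Rp i xi -> ~ S i xi -> dominated Rp i xi).

Definition arrow_fast (Rp S : forall i, set (E i)) : Prop :=
  arrow Rp S /\ (forall i xi, Rp i xi -> dominated Rp i xi -> ~ S i xi).

(** G ->* H : a finite (indices 0..n, when N = Some n) or countably infinite
    (N = None) sequence of pairings R^0 = G, R^1, ... with R^t -> R^(t+1) fast,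
    and H_i = bigcap_t R^t_i *)
Definition in_range (N : option nat) (t : nat) : Prop :=
  match N with None => True | Some n => (t <= n)%N end.

Definition reduces_to (H : forall i, set (E i)) : Prop :=
  exists (N : option nat) (Rs : nat -> forall i, set (E i)),
    (forall i, Rs 0%N i = G i) /\
    (forall t, in_range N t.+1 -> arrow_fast (Rs t) (Rs t.+1)) /\
    (forall i, H i = [set xi | forall t, in_range N t -> Rs t i xi]).

Definition maximal_reduction (H : forall i, set (E i)) : Prop :=
  reduces_to H /\
  forall H' : forall i, set (E i), (forall i, H' i `<=` H i) ->
    arrow H H' -> forall i, H' i = H i.

End QualitativeGame.

Arguments profile {R I} E.
Arguments upd {R I E} x i yi.
Arguments in_prod {R I E} S x.
Arguments in_prod_minus {R I E} S i x.
Arguments ropen {T} A B.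
Arguments rclosed {T} A B.
Arguments property_T {R I E} G P Q.
Arguments pairing {R I E} G H.
Arguments pairing_nonempty {R I E} H.
Arguments succH {R I E} P H i xi yi.
Arguments dominated {R I E} G P Rp i xi.
Arguments arrow {R I E} G P Rp S.
Arguments arrow_fast {R I E} G P Rp S.
Arguments in_range N t.
Arguments reduces_to {R I E} G P H.
Arguments maximal_reduction {R I E} G P H.

(* Main.v *)
Require Import Defs.
From HB Require Import structures.
From mathcomp Require Import all_boot all_order all_algebra.
From mathcomp Require Import all_classical all_reals all_analysis.
Import Order.TTheory GRing.Theory Num.Theory.
Local Open Scope classical_set_scope.

Section Upd.
Context {R : realType} {I : Type} (E : I -> tvsType R).

Lemma upd_same (x : profile E) i (y : E i) : upd x i y i = y.
Proof.
rewrite /upd; case: (pselect (i = i)) => [e|//].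
by rewrite (Prop_irrelevance e erefl).
Qed.

Lemma upd_other (x : profile E) i (y : E i) j : i <> j -> upd x i y j = x j.
Proof. by rewrite /upd; case: (pselect (i = j)). Qed.

Lemma upd_upd (x : profile E) i (a b : E i) : upd (upd x i a) i b = upd x i b.
Proof.
apply: functional_extensionality_dep => j.
rewrite /upd; by case: (pselect (i = j)).
Qed.

Lemma in_prod_upd (S : forall i, set (E i)) (x : profile E) i (y : E i) :
  in_prod_minus S i x -> S i y -> in_prod S (upd x i y).
Proof.
move=> hx hy j; case: (pselect (i = j)) => [e|ne].
  by subst j; rewrite upd_same.
by rewrite upd_other //; apply: hx => e; apply: ne.
Qed.
End Upd.
Arguments in_prod_upd {R I E S x i y}.
Arguments upd_same {R I E} x i y.
Arguments upd_other {R I E} x i y j.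
Arguments upd_upd {R I E} x i a b.
Lemma compact_In0' (T : topologicalType) (A : set T) (J : choiceType) (D : set J)
  (f : J -> set T) : compact A -> D !=set0 -> closed_fam_of A D f -> finI D f ->
  \bigcap_(i in D) f i !=set0.
Proof.
move=> Aco [i Di] [g gcl feAg] finIf.
have [|p [Ap clfinIfp]] := Aco _ (finI_filter finIf).
  by exists (f i); [apply: finI_from1|rewrite feAg // => ? []].
exists p => j Dj; rewrite feAg //; split=> //; apply: gcl => // B.
by apply: clfinIfp; exists (f j); [apply: finI_from1|rewrite feAg // => ? []].
Qed.
Arguments compact_In0' {T A J D f}.
Section PartB.
Context {R : realType} {I : Type} (E : I -> tvsType R).
Variables (G : forall i, set (E i)) (P : forall i, profile E -> set (E i)).

Definition step (Rp : forall i, set (E i)) : forall i, set (E i) :=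
  fun i => [set x | Rp i x /\ ~ dominated G P Rp i x].

Fixpoint canon (t : nat) : forall i, set (E i) :=
  match t with 0 => G | t.+1 => step (canon t) end.

Lemma in_range_S N t : in_range N t.+1 -> in_range N t.
Proof. by case: N => //= n; apply: ltnW. Qed.
Arguments in_range_S {N t}.

Lemma canon_eq N (Rs : nat -> forall i, set (E i)) :
  (forall i, Rs 0%N i = G i) ->
  (forall t, in_range N t.+1 -> arrow_fast G P (Rs t) (Rs t.+1)) ->
  forall t, in_range N t -> Rs t = canon t.
Proof.
move=> h0 hs; elim=> [_|t IH ht].
  by apply: functional_extensionality_dep => i; rewrite h0.
have eR := IH (in_range_S ht).
have [[sub ar] fa] := hs t ht.
apply: functional_extensionality_dep => i /=; rewrite -eR.
apply/seteqP; split => x.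
  move=> hx; split; first exact: sub.
  by move=> hd; apply: (fa i x (sub i x hx) hd).
move=> [hx hd]; apply: contrapT => hn; apply: hd; exact: ar.
Qed.

Arguments canon_eq {N Rs} _ _ {t}.

Lemma canon_decr t i : canon t.+1 i `<=` canon t i.
Proof. by move=> x []. Qed.

Lemma canon_decr_le s t i : (s <= t)%N -> canon t i `<=` canon s i.
Proof.
elim: t => [|t IH]; first by rewrite leqn0 => /eqP ->.
rewrite leq_eqVlt => /orP[/eqP -> //|hs].
move=> x /canon_decr; exact: IH.
Qed.

Arguments canon_decr_le {s t i}.

Lemma canon_fix n : canon n.+1 = canon n -> forall t, (n <= t)%N -> canon t = canon n.
Proof.
move=> hn; elim=> [|t IH]; first by rewrite leqn0 => /eqP ->.
rewrite leq_eqVlt => /orP[/eqP <- //|hs].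
by rewrite /= IH.
Qed.

Lemma max_red_char H : maximal_reduction G P H ->
  forall i, H i = [set x | forall t, canon t i x].
Proof.
move=> [[N [Rs [h0 [hs hH]]]] hmax] i.
have eH : forall i, H i = [set x | forall t, in_range N t -> canon t i x].
  move=> j; rewrite hH; apply/seteqP; split => x hx t ht.
    by rewrite -(canon_eq h0 hs ht); apply: hx.
  by rewrite (canon_eq h0 hs ht); apply: hx.
case: N h0 hs hH eH => [n|] h0 hs hH eH; last first.
  by rewrite eH; apply/seteqP; split => x hx t //; apply: hx.
have eHn : H = canon n.
  apply: functional_extensionality_dep => j; rewrite eH.
  apply/seteqP; split => x hx; first exact: (hx n (leqnn n)).
  by move=> t ht; apply: (canon_decr_le ht).
have fix1 : canon n.+1 = canon n.
  apply: functional_extensionality_dep => j.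
  rewrite -eHn; apply: hmax; rewrite eHn.
    by move=> k; exact: canon_decr.
  split; first by move=> k; exact: canon_decr.
  move=> k x hx hn; apply: contrapT => hd; apply: hn; by split.
rewrite eHn; apply/seteqP; split => x hx; last exact: hx.
move=> t; have [le|lt] := leqP n t; first by rewrite (canon_fix _ fix1 _ le); exact: hx.
by apply: (canon_decr_le (ltnW lt)).
Qed.
End PartB.
Arguments in_range_S {N t}.
Section PartA.
Context {R : realType} {I : Type} (E : I -> tvsType R).
Variables (G : forall i, set (E i)) (P Q : forall i, profile E -> set (E i)).
Hypothesis hT : property_T G P Q.
Hypothesis hi : forall i (yi : E i) x, G i yi -> in_prod_minus G i x -> Q i (upd x i yi) yi.
Hypothesis hQ : forall i x, in_prod G x -> rclosed (G i) (Q i x).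
Hypothesis hiii : forall i x, in_prod G x -> ~ closure (P i x) (x i).
Hypothesis hcomp : forall i, compact (G i).

Lemma part_a H : reduces_to G P H ->
     forall i (xi yi : E i), G i xi -> G i yi -> succH P H i xi yi ->
     exists xs, H i xs /\ succH P H i xi xs /\
       forall zi, G i zi -> ~ succH P H i xs zi.
Proof.
move=> [N [Rs [h0 [hs hH]]]] i xi yi Gxi Gyi [[x0 hx0] sxy].
have r0 : in_range N 0 by case: N {hs hH}.
have HRs : forall t, in_range N t -> forall j x, H j x -> Rs t j x.
  by move=> t ht j x; rewrite hH => /(_ t ht).
have HG : forall j x, H j x -> G j x by move=> j x /(HRs 0 r0); rewrite h0.
have HmG : forall x, in_prod_minus H i x -> in_prod_minus G i x.
  by move=> x hx j hj; apply: HG; apply: hx.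
pose sc (a b : E i) := forall x, in_prod_minus H i x -> P i (upd x i a) b.
have PQ : forall a x, in_prod_minus H i x -> G i a -> P i (upd x i a) `<=` Q i (upd x i a).
  by move=> a x hx Ga; exact: (hT _ _ (in_prod_upd (HmG x hx) Ga)).1.
have trQ : forall a b x, in_prod_minus H i x -> G i a -> P i (upd x i a) b ->
    Q i (upd x i b) `<=` P i (upd x i a).
  move=> a b x hx Ga hb; rewrite -(upd_upd x i a b).
  exact: (hT _ _ (in_prod_upd (HmG x hx) Ga)).2.
have trans : forall a b c, G i a -> G i b -> sc a b -> sc b c -> sc a c.
  move=> a b c Ga Gb sab sbc x hx; apply: (trQ a b x hx Ga (sab x hx)).
  by apply: (PQ b x hx Gb); exact: sbc x hx.
have irr : forall a, G i a -> ~ sc a a.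
  move=> a Ga saa; apply: (hiii i _ (in_prod_upd (HmG _ hx0) Ga)).
  rewrite upd_same; apply: subset_closure; exact: saa x0 hx0.
pose U c := G i c /\ sc xi c.
pose Rel : rel (E i) := fun s t => `[< s = t \/ (~ U s /\ U t) \/ (U s /\ U t /\ sc s t) >].
have RelUU : forall c m, U c -> U m -> Rel c m -> c = m \/ sc c m.
  move=> c m Uc Um /asboolP [->|[[/(_ Uc)]//|[_ [_ h]]]]; [by left|by right].
have Uyi : U yi by split.
have [t tmax] : exists t, forall s, Rel t s -> s = t.
  apply: Zorn.
  - by move=> t; apply/asboolP; left.
  - move=> a b c /asboolP hab /asboolP hbc; apply/asboolP.
    case: hab => [->//|[[nUa Ub]|[Ua [Ub sab]]]].
      case: hbc => [<-|[[nUb _]//|[_ [Uc _]]]]; first by right; left.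
      by right; left.
    case: hbc => [<-|[[nUb _]//|[_ [Uc sbc]]]]; first by right; right.
    by right; right; split => //; split => //; exact: (trans a b c Ua.1 Ub.1).
  - move=> a b /asboolP hab /asboolP hba.
    case: hab => [//|[[nUa Ub]|[Ua [Ub sab]]]].
      by case: hba => [->//|[[nUb _]//|[_ [Ua _]]]].
    case: hba => [->//|[[nUb _]//|[_ [_ sba]]]].
    by exfalso; apply: (irr a Ua.1); exact: (trans a b a Ua.1 Ub.1).
  move=> A Atot.
  have [[a0 [Aa0 Ua0]]|noU] := pselect (exists a, A a /\ U a); last first.
    exists yi => s As; apply/asboolP.
    have nUs : ~ U s by move=> Us; apply: noU; exists s.
    by right; left.
  pose C : set (E i) := fun c => A c /\ U c.
  have Ctot : forall c m, C c -> C m -> c = m \/ sc c m \/ sc m c.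
    move=> c m [Ac Uc] [Am Um]; case: (Atot c m Ac Am) => h.
      by case: (RelUU c m Uc Um h); [left|right; left].
    by case: (RelUU m c Um Uc h); [move=> ->; left|right; right].
  have [[m [Cm mmax]]|nomax] := pselect (exists m, C m /\ forall c, C c -> c = m \/ sc c m).
    exists m => s As; apply/asboolP.
    have [Us|nUs] := pselect (U s).
      case: (mmax s (conj As Us)) => [->|h]; first by left.
      by right; right; split=> //; split => //; exact: Cm.2.
    by right; left; split => //; exact: Cm.2.
  pose T c := \bigcap_(x in [set x | in_prod_minus H i x]) closure (Q i (upd x i c)).
  pose f c := G i `&` T c.
  have fam : closed_fam_of (G i) C f.
    exists T; last by [].
    move=> c _; apply: closed_bigI => x _; exact: closed_closure.
  have smax : forall s : seq (E i), {subset s <= C} ->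
      exists m, C m /\ forall c, c \in s -> c = m \/ sc c m.
    elim => [|a s IH] hsub.
      by exists a0; split => //.
    have Ca : C a by rewrite -in_setE; apply: hsub; rewrite mem_head.
    have [|m [Cm hm]] := IH.
      by move=> c cs; apply: hsub; rewrite in_cons cs orbT.
    case: (Ctot a m Ca Cm) => [eam|[sam|sma]].
    - exists m; split => // c; rewrite in_cons => /orP[/eqP ->|cs]; first by left.
      exact: hm.
    - exists m; split => // c; rewrite in_cons => /orP[/eqP ->|cs]; first by right.
      exact: hm.
    - exists a; split => // c; rewrite in_cons => /orP[/eqP ->|cs]; first by left.
      right; case: (hm c cs) => [->//|scm].
      have Cc : C c by rewrite -in_setE; apply: hsub; rewrite in_cons cs orbT.
      exact: (trans c m a Cc.2.1 Cm.2.1 scm sma).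
  have fin : finI C f.
    move=> D' hD'; have [|m [Cm hm]] := smax (finmap.enum_fset D').
      by move=> c hc; apply: hD'; exact: hc.
    exists m => c /= cD'.
    have Cc : C c by rewrite -in_setE; apply: hD'.
    split; first exact: Cm.2.1.
    move=> x hx.
    case: (hm c cD') => [->|scm].
      by apply: subset_closure; apply: hi; [exact: Cm.2.1|exact: HmG].
    apply: subset_closure; apply: (PQ c x hx Cc.2.1); exact: scm x hx.
  have [z hz] : \bigcap_(c in C) f c !=set0.
    have hC : C !=set0 by exists a0.
    exact: (compact_In0' (hcomp i) hC fam fin).
  have scz : forall c, C c -> sc c z.
    move=> c Cc; have [c' [Cc' scc']] : exists c', C c' /\ sc c c'.
      apply: contrapT => hn; apply: nomax; exists c; split => // d Cd.
      case: (Ctot d c Cd Cc) => [->|[h|h]]; [by left|by right|].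
      by exfalso; apply: hn; exists d.
    move=> x hx; apply: (trQ c c' x hx Cc.2.1 (scc' x hx)).
    have [Gz Tz] := hz c' Cc'.
    have := Tz x hx.
    have [D [cD eQ]] := hQ i (upd x i c') (in_prod_upd (HmG x hx) Cc'.2.1).
    rewrite eQ => hcl; split => //.
    move: (closureS (@subIsetl _ D (G i)) hcl).
    by rewrite -(proj1 (closure_id D) cD).
  have Gz : G i z := (hz a0 (conj Aa0 Ua0)).1.
  have Uz : U z := conj Gz (trans xi a0 z Gxi Ua0.1 Ua0.2 (scz a0 (conj Aa0 Ua0))).
  exists z => s As; apply/asboolP.
  have [Us|nUs] := pselect (U s); last by right; left.
  by right; right; split => //; split => //; exact: scz.
have Ut : U t.
  apply: contrapT => nUt; have : Rel t yi by apply/asboolP; right; left.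
  move/tmax => eyt; apply: nUt; rewrite -eyt; exact: Uyi.
have tmx : forall z, G i z -> ~ sc t z.
  move=> z Gz stz; have Uz : U z := conj Gz (trans xi t z Gxi Ut.1 Ut.2 stz).
  have : Rel t z by apply/asboolP; right; right.
  move/tmax => ezt; apply: (irr t Ut.1); rewrite ezt in stz; exact: stz.
have Ht : H i t.
  rewrite hH => s; elim: s => [|s IH] hr; first by rewrite h0; exact: Ut.1.
  have hs' := in_range_S hr; have Rt := IH hs'.
  apply: contrapT => nR.
  have [y [Gy hy]] := (hs s hr).1.2 i t Rt nR.
  apply: (tmx y Gy) => x hx; apply: hy => j hj; apply: (HRs s hs'); exact: hx.
exists t; split => //; split.
  by split; [exists x0|exact: Ut.2].
by move=> zi Gzi [_ h]; exact: (tmx zi Gzi h).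
Qed.
End PartA.
Theorem corollary2 (R : realType) (I : Type) (E : I -> tvsType R)
  (G : forall i, set (E i)) (P Q : forall i, profile E -> set (E i)) :
  inhabited I ->
  (forall i, hausdorff_space (E i)) ->
  (forall i, compact (G i)) ->
  (forall i, convex_set (G i : set (convex_lmodType (E i)))) ->
  (* P_i, Q_i : prod_j G_j -> 2^{G_i} *)
  (forall i x, in_prod G x -> P i x `<=` G i /\ Q i x `<=` G i) ->
  property_T G P Q ->
  (* (i) *)
  (forall i (yi : E i) x, G i yi -> in_prod_minus G i x -> Q i (upd x i yi) yi) ->
  (* (ii) *)
  (forall i x, in_prod G x ->
     convex_set (Q i x : set (convex_lmodType (E i))) /\ rclosed (G i) (Q i x)) ->
  (* (iii) *)
  (forall i x, in_prod G x -> ~ closure (P i x) (x i)) ->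
  (* (iv) *)
  (forall i, forall V : set (E i), ropen (G i) V ->
     ropen (in_prod G) [set x | in_prod G x /\ P i x `&` V !=set0]) ->
  (forall i x, in_prod G x ->
     ropen (G i) (P i x) /\ convex_set (P i x : set (convex_lmodType (E i)))) ->
  (* (a) *)
  (forall H, reduces_to G P H ->
     forall i (xi yi : E i), G i xi -> G i yi -> succH P H i xi yi ->
     exists xs, H i xs /\ succH P H i xi xs /\
       forall zi, G i zi -> ~ succH P H i xs zi) /\
  (* (b) *)
  (forall M, pairing_nonempty M -> maximal_reduction G P M ->
     forall M', maximal_reduction G P M' -> forall i, M' i = M i).
Proof.
move=> _ _ hcomp _ _ hT hi hQ hiii _ _; split.
  exact: (@part_a _ _ E G P Q hT hi (fun i x hx => (hQ i x hx).2) hiii hcomp).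
move=> M _ hM M' hM' i.
by rewrite (max_red_char _ _ _ _ hM') (max_red_char _ _ _ _ hM).
Qed.
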